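(* Let $A$ be a metabelian Lie $U$-algebra over a field $k$ and let $A_\Delta$ be its $\Delta$-localisation. Then $A$ and $A_\Delta$ are universally equivalent, i.e. $\mathrm{ucl}(A)=\mathrm{ucl}(A_\Delta)$: they satisfy exactly the same universal sentences of the first-order language of Lie $k$-algebras.
   Context: All algebras are over a fixed field $k$. A Lie algebra is metabelian if $(a\circ b)\circ(c\circ d)=0$ identically; $A^2$ is the ideal spanned by all products; $\mathrm{Fit}(A)$ (Fitting radical) is the ideal generated by all elements lying in nilpotent ideals of $A$. A metabelian Lie algebra $A$ is a $U$-algebra if $\mathrm{Fit}(A)$ is abelian and torsion-free as a module over $R=k[x_\alpha:\alpha\in\Lambda]$, where $\{z_\alpha:\alpha\in\Lambda\}\subseteq A$ is a family whose images form a basis of $A/\mathrm{Fit}(A)$ and the module structure is $b\cdot x_\alpha=b\circ z_\alpha$ for $b\in\mathrm{Fit}(A)$, extended multiplicatively and linearly. $\Delta$-localisation: let $V$ be the $k$-span of $\{z_\alpha\}$, $\Delta$ the ideal of $R$ generated by all $x_\alpha$, $R_\Delta$ the localisation of $R$ at $\Delta$, and $\mathrm{Fit}_\Delta(A)=R_\Delta\otimes_R\mathrm{Fit}(A)$ (containing $\mathrm{Fit}(A)$). $A_\Delta$ is the $k$-space $V\oplus\mathrm{Fit}_\Delta(A)$ with bracket: for $v,w\in V$, $v\circ w$ is the product in $A$ (an element of $\mathrm{Fit}(A)$); products of two elements of $\mathrm{Fit}_\Delta(A)$ are $0$; $u\circ z_\alpha=u\cdot x_\alpha=-z_\alpha\circ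 u$ for $u\in\mathrm{Fit}_\Delta(A)$, extended bilinearly. It is a metabelian Lie algebra containing $A=V\oplus\mathrm{Fit}(A)$ as a subalgebra. The first-order language of Lie $k$-algebras has symbols $\circ,+,-,0$ and a unary function symbol for multiplication by each scalar of $k$; $\mathrm{ucl}(B)$ is the class of Lie $k$-algebras satisfying all universal sentences of this language true in $B$. *)

(* Defs.v *)
From mathcomp Require Import all_boot all_algebra.
From mathcomp Require Import mpoly.
Set Implicit Arguments. Unset Strict Implicit. Unset Printing Implicit Defensive.
Import GRing.Theory.
Local Open Scope ring_scope.

Section LieDefs.
Variables (k : fieldType) (A : lmodType k) (br : A -> A -> A).

Definition lie_axioms : Prop :=
  [/\ (forall c x y w, br (c *: x + y) w = c *: br x w + br y w),
      (forall c x y w, br w (c *: x + y) = c *: br w x + br w y),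
      (forall x, br x x = 0)
    & (forall x y w, br x (br y w) + br y (br w x) + br w (br x y) = 0)].

Definition metabelian : Prop :=
  forall a b c d, br (br a b) (br c d) = 0.

Definition lie_ideal (I : A -> Prop) : Prop :=
  [/\ I 0, (forall x y, I x -> I y -> I (x + y)),
      (forall (c : k) x, I x -> I (c *: x))
    & (forall x a, I x -> I (br x a) /\ I (br a x))].

Definition lnprod (x : A) (ys : seq A) : A := foldl br x ys.

(** an ideal I is nilpotent iff I^(c+1) = 0 for some c, i.e. all left-normed
    products of c+1 elements of I vanish *)
Definition nilpotent_ideal (I : A -> Prop) : Prop :=
  lie_ideal I /\
  exists c : nat, forall x ys, size ys = c -> I x ->
    (forall y, y \in ys -> I y) -> lnprod x ys = 0.

(** Fitting radical: the ideal generated by all elements lying in nilpotent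
    ideals (smallest ideal containing them) *)
Definition fit (x : A) : Prop :=
  forall J, lie_ideal J ->
    (forall I y, nilpotent_ideal I -> I y -> J y) -> J x.

Variables (Lam : Type) (z : Lam -> A).

Definition zcomb (n : nat) (idx : 'I_n -> Lam) (c : 'I_n -> k) : A :=
  \sum_(i < n) c i *: z (idx i).

(** the images of the z_alpha form a basis of A / Fit(A) *)
Definition fit_basis : Prop :=
  (forall n (idx : 'I_n -> Lam) (c : 'I_n -> k), injective idx ->
      fit (zcomb idx c) -> forall i, c i = 0) /\
  (forall a, exists n (idx : 'I_n -> Lam) (c : 'I_n -> k), fit (a - zcomb idx c)).

Definition inV (v : A) : Prop :=
  exists n (idx : 'I_n -> Lam) (c : 'I_n -> k), v = zcomb idx c.

(** action of the monomial x_(idx 0)^(m 0) ... x_(idx (n-1))^(m (n-1)) on b,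
    where b . x_alpha = b o z_alpha *)
Definition mon_act (n : nat) (idx : 'I_n -> Lam) (m : 'X_{1..n}) (b : A) : A :=
  foldr (fun i x => iter (m i) (fun y => br y (z (idx i))) x) b (enum 'I_n).

(** action of the polynomial p(x_(idx 0), ..., x_(idx (n-1))) in
    R = k[x_alpha : alpha in Lam] on b *)
Definition poly_act (n : nat) (idx : 'I_n -> Lam) (p : {mpoly k[n]}) (b : A) : A :=
  \sum_(m <- msupp p) p@_m *: mon_act idx m b.

(** Fit(A) torsion-free as R-module: every element of R lies in the image of
    some {mpoly k[n]} under x_i |-> x_(idx i) with idx injective *)
Definition fit_torsion_free : Prop :=
  forall n (idx : 'I_n -> Lam) (p : {mpoly k[n]}) (b : A),
    injective idx -> p != 0 -> fit b -> poly_act idx p b = 0 -> b = 0.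

Definition U_algebra : Prop :=
  (forall a b, fit a -> fit b -> br a b = 0) /\ fit_torsion_free.

(** elements of S = R \ Delta: polynomials with nonzero constant term *)
Record sfactor := SFactor {
  sf_n : nat;
  sf_idx : 'I_sf_n -> Lam;
  sf_p : {mpoly k[sf_n]};
  sf_const : sf_p@_0%MM != 0 }.
Arguments sf_idx : clear implicits.
Arguments sf_p : clear implicits.

(** a denominator is a finite product of elements of S *)
Definition den := seq sfactor.

Definition den_act (g : den) (b : A) : A :=
  foldr (fun (f : sfactor) x => poly_act (sf_idx f) (sf_p f) x) b g.

(** representatives of elements of A_Delta = V (+) Fit_Delta(A):
    (v, b, g) stands for v + b/g with v in V, b in Fit(A), g in S *)
Definition loc_car := (A * A * den)%type.

Definition loc_dom (x : loc_car) : Prop := inV x.1.1 /\ fit x.1.2.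

(** b/g = b'/g' in S^{-1} Fit(A) = R_Delta (x)_R Fit(A) iff
    t (g' b - g b') = 0 for some t in S *)
Definition loc_eqv (x y : loc_car) : Prop :=
  x.1.1 = y.1.1 /\
  exists t : den, den_act t (den_act y.2 x.1.2 - den_act x.2 y.1.2) = 0.

Definition loc_zero : loc_car := (0, 0, [::]).
Definition loc_add (x y : loc_car) : loc_car :=
  (x.1.1 + y.1.1, den_act y.2 x.1.2 + den_act x.2 y.1.2, x.2 ++ y.2).
Definition loc_opp (x : loc_car) : loc_car := (- x.1.1, - x.1.2, x.2).
Definition loc_scale (c : k) (x : loc_car) : loc_car :=
  (c *: x.1.1, c *: x.1.2, x.2).
(** (v + b/g) o (v' + b'/g') = v o v' + (b o v')/g - (b' o v)/g'
    (using u o z_alpha = u . x_alpha = - z_alpha o u, extended bilinearly,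
    and Fit_Delta o Fit_Delta = 0), written over the denominator g g' *)
Definition loc_br (x y : loc_car) : loc_car :=
  (0, den_act (x.2 ++ y.2) (br x.1.1 y.1.1)
       + den_act y.2 (br x.1.2 y.1.1) - den_act x.2 (br y.1.2 x.1.1),
   x.2 ++ y.2).

End LieDefs.

Inductive term (k : Type) : Type :=
  | TVar of nat
  | TZero
  | TAdd of term k & term k
  | TOpp of term k
  | TScale of k & term k
  | TBr of term k & term k.

Inductive qf_formula (k : Type) : Type :=
  | FTrue | FFalse
  | FEq of term k & term k
  | FNot of qf_formula k
  | FAnd of qf_formula k & qf_formula k
  | FOr of qf_formula k & qf_formula k
  | FImp of qf_formula k & qf_formula k.

(** an L-structure, presented by a set of representatives [dom] in a carrier
    type modulo a congruence [eqv] (for A itself: all of A, Leibniz equality) *)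
Record lstruct (k : Type) := LStruct {
  lcar : Type;
  ldom : lcar -> Prop;
  leqv : lcar -> lcar -> Prop;
  lzero : lcar;
  ladd : lcar -> lcar -> lcar;
  lopp : lcar -> lcar;
  lscale : k -> lcar -> lcar;
  lbr : lcar -> lcar -> lcar }.

Fixpoint eval_term (k : Type) (S : lstruct k) (e : nat -> lcar S) (t : term k)
  : lcar S :=
  match t with
  | TVar i => e i
  | TZero => lzero S
  | TAdd t1 t2 => ladd (eval_term e t1) (eval_term e t2)
  | TOpp t1 => lopp (eval_term e t1)
  | TScale c t1 => lscale c (eval_term e t1)
  | TBr t1 t2 => lbr (eval_term e t1) (eval_term e t2)
  end.

Fixpoint holds (k : Type) (S : lstruct k) (e : nat -> lcar S) (f : qf_formula k)
  : Prop :=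
  match f with
  | FTrue => True
  | FFalse => False
  | FEq t1 t2 => leqv (eval_term e t1) (eval_term e t2)
  | FNot f1 => ~ holds e f1
  | FAnd f1 f2 => holds e f1 /\ holds e f2
  | FOr f1 f2 => holds e f1 \/ holds e f2
  | FImp f1 f2 => holds e f1 -> holds e f2
  end.

(** the universal sentence  forall x_0 x_1 ..., f  (universal closure of the
    quantifier-free f) is true in S *)
Definition univ_true (k : Type) (S : lstruct k) (f : qf_formula k) : Prop :=
  forall e : nat -> lcar S, (forall i, ldom (e i)) -> holds e f.

Definition univ_equiv (k : Type) (S1 S2 : lstruct k) : Prop :=
  forall f : qf_formula k, univ_true S1 f <-> univ_true S2 f.

Definition lie_struct (k : fieldType) (A : lmodType k) (br : A -> A -> A)
  : lstruct k :=
  @LStruct k A (fun _ => True) (@eq A) 0 +%R (fun x => - x) *:%R br.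

Definition loc_struct (k : fieldType) (A : lmodType k) (br : A -> A -> A)
  (Lam : Type) (z : Lam -> A) : lstruct k :=
  @LStruct k (@loc_car k A Lam) (@loc_dom k A br Lam z) (@loc_eqv k A br Lam z)
    (@loc_zero k A Lam) (@loc_add k A br Lam z) (@loc_opp k A Lam)
    (@loc_scale k A Lam) (@loc_br k A br Lam z).

(* Main.v *)
Require Import Defs.
From mathcomp Require Import all_boot all_algebra.
From mathcomp Require Import mpoly.
From mathcomp Require Import zify.
From Stdlib Require Import ClassicalEpsilon FunctionalExtensionality.
Set Implicit Arguments. Unset Strict Implicit. Unset Printing Implicit Defensive.
Import GRing.Theory.
Local Open Scope ring_scope.

Section Dev.
Variables (k : fieldType) (A : lmodType k) (br : A -> A -> A).
Variables (Lam : Type) (z : Lam -> A).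
Hypothesis Hlie : lie_axioms br.
Hypothesis Hmeta : metabelian br.

Lemma brZDl c x y w : br (c *: x + y) w = c *: br x w + br y w.
Proof. by move: Hlie; rewrite /lie_axioms; case. Qed.
Lemma brZDr c x y w : br w (c *: x + y) = c *: br w x + br w y.
Proof. by move: Hlie; rewrite /lie_axioms; case. Qed.
Lemma brxx x : br x x = 0. Proof. by move: Hlie; rewrite /lie_axioms; case. Qed.
Lemma jacobi x y w : br x (br y w) + br y (br w x) + br w (br x y) = 0.
Proof. by move: Hlie; rewrite /lie_axioms; case. Qed.

Lemma brDl x y w : br (x + y) w = br x w + br y w.
Proof. by have := brZDl 1 x y w; rewrite !scale1r. Qed.
Lemma brDr x y w : br w (x + y) = br w x + br w y.
Proof. by have := brZDr 1 x y w; rewrite !scale1r. Qed.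
Lemma br0l w : br 0 w = 0.
Proof. have h := brDl 0 0 w; rewrite addr0 in h. by apply: (addrI (br 0 w)); rewrite addr0 -h. Qed.
Lemma br0r w : br w 0 = 0.
Proof. have h := brDr 0 0 w; rewrite addr0 in h. by apply: (addrI (br w 0)); rewrite addr0 -h. Qed.
Lemma brZl c x w : br (c *: x) w = c *: br x w.
Proof. by rewrite -[c *: x]addr0 brZDl br0l addr0. Qed.
Lemma brZr c x w : br w (c *: x) = c *: br w x.
Proof. by rewrite -[c *: x]addr0 brZDr br0r addr0. Qed.
Lemma brNl x w : br (- x) w = - br x w.
Proof. by rewrite -scaleN1r brZl scaleN1r. Qed.
Lemma brNr x w : br w (- x) = - br w x.
Proof. by rewrite -scaleN1r brZr scaleN1r. Qed.
Lemma brBl x y w : br (x - y) w = br x w - br y w.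
Proof. by rewrite brDl brNl. Qed.
Lemma brBr x y w : br w (x - y) = br w x - br w y.
Proof. by rewrite brDr brNr. Qed.
Lemma brC x y : br x y = - br y x.
Proof.
have := brxx (x + y); rewrite brDl !brDr !brxx add0r addr0 => /eqP.
by rewrite addr_eq0 => /eqP.
Qed.

Lemma fit_ideal : lie_ideal br (fit br).
Proof.
split.
- by move=> J [] ? _ _ _ _.
- by move=> x y Hx Hy J HJ Hn; move: (HJ); rewrite /lie_ideal; case => _ HD _ _; apply: HD; [apply: Hx|apply: Hy].
- by move=> c x Hx J HJ Hn; move: (HJ); rewrite /lie_ideal; case => _ _ HZ _; apply: HZ; apply: Hx.
- move=> x a Hx; split=> J HJ Hn; move: (HJ); rewrite /lie_ideal; case => _ _ _ HB;
  by have [] := HB x a (Hx J HJ Hn).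
Qed.
Lemma fit0 : fit br 0. Proof. by move: fit_ideal; rewrite /lie_ideal; case. Qed.
Lemma fitD x y : fit br x -> fit br y -> fit br (x + y). Proof. by move: fit_ideal; rewrite /lie_ideal; case => _ H _ _; exact: H. Qed.
Lemma fitZ c x : fit br x -> fit br (c *: x). Proof. by move: fit_ideal; rewrite /lie_ideal; case => _ _ H _; exact: H. Qed.
Lemma fitN x : fit br x -> fit br (- x). Proof. by move=> h; rewrite -scaleN1r; apply: fitZ. Qed.
Lemma fitB x y : fit br x -> fit br y -> fit br (x - y). Proof. by move=> h1 h2; apply: fitD => //; apply: fitN. Qed.
Lemma fit_brl x a : fit br x -> fit br (br x a). Proof. move=> hx; move: fit_ideal; rewrite /lie_ideal; case => _ _ _ H; by case: (H x a hx). Qed.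
Lemma fit_brr x a : fit br x -> fit br (br a x). Proof. move=> hx; move: fit_ideal; rewrite /lie_ideal; case => _ _ _ H; by case: (H x a hx). Qed.
Lemma fit_sum (I : Type) (s : seq I) (P : pred I) (F : I -> A) :
  (forall i, P i -> fit br (F i)) -> fit br (\sum_(i <- s | P i) F i).
Proof. by move=> h; elim/big_rec: _ => [|i x Pi hx]; [apply: fit0| apply: fitD; [apply: h|]]. Qed.

Definition sq (x : A) : Prop :=
  forall J : A -> Prop, J 0 -> (forall x y, J x -> J y -> J (x + y)) ->
    (forall c x, J x -> J (c *: x)) -> (forall a b, J (br a b)) -> J x.

Lemma sq_br0 x y : sq x -> sq y -> br x y = 0.
Proof.
move=> hx hy.
pose J := fun x => forall y, sq y -> br x y = 0.
suff: J x by apply.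
apply: hx.
- by move=> y1 _; rewrite br0l.
- by move=> x1 x2 h1 h2 y1 hy1; rewrite brDl h1 // h2 // addr0.
- by move=> c x1 h y1 hy1; rewrite brZl h // scaler0.
- move=> a b y1 hy1; apply: (hy1 (fun y => br (br a b) y = 0)).
  + by rewrite br0r.
  + by move=> x1 x2 h1 h2; rewrite brDr h1 h2 addr0.
  + by move=> c x1 h; rewrite brZr h scaler0.
  + by move=> c d; apply: Hmeta.
Qed.

Lemma fit_br a b : fit br (br a b).
Proof.
move=> J HJ Hn; apply: (Hn sq).
- split; first (rewrite /lie_ideal; split).
  + by move=> J0 h0 _ _ _.
  + move=> x1 y1 hx hy J0 h0 hD hZ hB; apply: (hD); [exact: hx h0 hD hZ hB|exact: hy h0 hD hZ hB].
  + move=> c x1 hx J0 h0 hD hZ hB; apply: (hZ); exact: hx h0 hD hZ hB.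
  + by move=> x1 a0 _; split=> J0 _ _ _ hB; apply: hB.
- exists 1%N => x1 [|y1 [|]] //= _ hx hy; rewrite /lnprod /=.
  by apply: sq_br0 => //; apply: hy; rewrite inE.
- by move=> J0 _ _ _ hB; apply: hB.
Qed.


Hypothesis Hab : forall a b, fit br a -> fit br b -> br a b = 0.

Lemma fit_comm u a b : fit br u -> br (br u a) b = br (br u b) a.
Proof.
move=> hu; have := jacobi u a b.
rewrite (Hab hu (fit_br a b)) add0r.
have -> : br a (br b u) = br (br u b) a by rewrite brC [br b u]brC brNl opprK.
have -> : br b (br u a) = - br (br u a) b by rewrite brC.
by move/eqP; rewrite addr_eq0 opprK => /eqP ->.
Qed.

Lemma ad_der a b w : br (br a b) w = br (br a w) b + br a (br b w).
Proof.
have := jacobi a b w.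
have -> : br b (br w a) = br (br a w) b by rewrite brC [br w a]brC brNl opprK.
have -> : br w (br a b) = - br (br a b) w by rewrite brC.
by move/eqP; rewrite addr_eq0 opprK => /eqP <-; rewrite addrC.
Qed.

Definition lin (T : A -> A) := forall c x y, T (c *: x + y) = c *: T x + T y.
Definition Good (T : A -> A) := [/\ lin T, (forall u, fit br u -> fit br (T u))
   & (forall u a, fit br u -> T (br u a) = br (T u) a)].
Definition Comm (T : A -> A) := Good T /\
  (forall S, Good S -> forall u, fit br u -> S (T u) = T (S u)).
Definition Der (D : A -> A) := [/\ Good D, (forall a, fit br (D a))
   & (forall a b, D (br a b) = br (D a) b + br a (D b))].

Section LinFacts.
Variable T : A -> A.
Hypothesis HT : lin T.
Lemma linD x y : T (x + y) = T x + T y.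
Proof. by have := HT 1 x y; rewrite !scale1r. Qed.
Lemma lin0 : T 0 = 0.
Proof. have h := linD 0 0; rewrite addr0 in h. by apply: (addrI (T 0)); rewrite addr0 -h. Qed.
Lemma linZ c x : T (c *: x) = c *: T x.
Proof. by have := HT c x 0; rewrite !addr0 lin0 addr0. Qed.
Lemma linN x : T (- x) = - T x.
Proof. by rewrite -scaleN1r linZ scaleN1r. Qed.
Lemma linB x y : T (x - y) = T x - T y.
Proof. by rewrite linD linN. Qed.
Lemma lin_sum (I : Type) (s : seq I) (P : pred I) (F : I -> A) :
  T (\sum_(i <- s | P i) F i) = \sum_(i <- s | P i) T (F i).
Proof. by elim/big_rec2: _ => [|i x y Pi <-]; rewrite ?lin0 ?linD. Qed.
End LinFacts.

Definition ad (w : A) := fun y => br y w.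

Lemma lin_id : lin id. Proof. by []. Qed.
Lemma Good_id : Good id. Proof. by split. Qed.
Lemma Good_comp T S : Good T -> Good S -> Good (fun x => T (S x)).
Proof.
case=> lT fT cT [lS fS cS]; split.
- by move=> c x y; rewrite lS lT.
- by move=> u hu; apply: fT; apply: fS.
- by move=> u a hu; rewrite cS // cT //; apply: fS.
Qed.
Lemma Good_ad w : Good (ad w).
Proof.
split.
- by move=> c x y; rewrite /ad brZDl.
- by move=> u hu; apply: fit_brl.
- by move=> u a hu; rewrite /ad fit_comm.
Qed.
Lemma Comm_id : Comm id. Proof. by split; [apply: Good_id|]. Qed.
Lemma Comm_comp T S : Comm T -> Comm S -> Comm (fun x => T (S x)).
Proof.
case=> gT cT [gS cS]; split; first exact: Good_comp.
move=> R gR u hu; case: gS => _ fS _.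
by rewrite (cT R gR (S u) (fS u hu)) (cS R gR u hu).
Qed.
Lemma Comm_ad w : Comm (ad w).
Proof. split; first exact: Good_ad. by move=> S [_ _ cS] u hu; rewrite /ad cS. Qed.
Lemma Comm_iter j T : Comm T -> Comm (iter j T).
Proof. move=> hT; elim: j => [|j ih] /=; first exact: Comm_id. exact: Comm_comp. Qed.
Lemma Comm_add T S : Comm T -> Comm S -> Comm (fun x => T x + S x).
Proof.
case=> [[lT fT cT] hT] [[lS fS cS] hS]; split; first split.
- move=> c x y; rewrite lT lS scalerDr -!addrA; congr (_ + _).
  by rewrite addrCA.
- by move=> u hu; apply: fitD; [apply: fT|apply: fS].
- by move=> u a hu; rewrite cT // cS // brDl.
- move=> R [lR fR cR] u hu; rewrite linD //. by rewrite hT // hS.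
Qed.
Lemma Comm_scale c T : Comm T -> Comm (fun x => c *: T x).
Proof.
case=> [[lT fT cT] hT]; split; first split.
- by move=> c' x y; rewrite lT scalerDr !scalerA mulrC.
- by move=> u hu; apply: fitZ; apply: fT.
- by move=> u a hu; rewrite cT // brZl.
- move=> R [lR fR cR] u hu; rewrite linZ //. by rewrite hT.
Qed.
Lemma Comm_zero : Comm (fun _ => 0).
Proof.
split; first split.
- by move=> c x y; rewrite scaler0 addr0.
- by move=> u _; apply: fit0.
- by move=> u a _; rewrite br0l.
- by move=> R [lR _ _] u _; rewrite lin0.
Qed.
Lemma Comm_sum (I : Type) (s : seq I) (P : pred I) (F : I -> A -> A) :
  (forall i, P i -> Comm (F i)) -> Comm (fun x => \sum_(i <- s | P i) F i x).
Proof.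
move=> h; elim: s => [|i s ih].
  by have := Comm_zero; congr Comm; apply: functional_extensionality => x; rewrite big_nil.
case Pi: (P i).
  have := Comm_add (h i Pi) ih; congr Comm; apply: functional_extensionality => x.
  by rewrite big_cons Pi.
by move: ih; congr Comm; apply: functional_extensionality => x; rewrite big_cons Pi.
Qed.

Lemma Der_ad w : Der (ad w).
Proof.
split; first exact: Good_ad.
- by move=> a; apply: fit_br.
- by move=> a b; rewrite /ad ad_der.
Qed.
Lemma Der_comp T D : Good T -> Der D -> Der (fun x => T (D x)).
Proof.
move=> gT [gD fD dD]; split; first exact: Good_comp.
- by move=> a; case: gT => _ fT _; apply: fT.
- move=> a b; case: gT => lT fT cT.
  rewrite dD linD // cT //; congr (_ + _).
  by rewrite brC linN // cT // [RHS]brC.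
Qed.
Lemma Der_add D E : Der D -> Der E -> Der (fun x => D x + E x).
Proof.
case=> gD fD dD [gE fE dE]; split.
- case: gD => lD fD' cD; case: gE => lE fE' cE; split.
  + move=> c x y; rewrite lD lE scalerDr -!addrA; congr (_ + _); by rewrite addrCA.
  + by move=> u hu; apply: fitD; [apply: fD'|apply: fE'].
  + by move=> u a hu; rewrite cD // cE // brDl.
- by move=> a; apply: fitD.
- move=> a b; rewrite dD dE brDl brDr.
  by rewrite -!addrA; congr (_ + _); rewrite addrCA.
Qed.
Lemma Der_scale c D : Der D -> Der (fun x => c *: D x).
Proof.
case=> gD fD dD; split.
- case: gD => lD fD' cD; split.
  + by move=> c' x y; rewrite lD scalerDr !scalerA mulrC.
  + by move=> u hu; apply: fitZ; apply: fD'.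
  + by move=> u a hu; rewrite cD // brZl.
- by move=> a; apply: fitZ.
- by move=> a b; rewrite dD scalerDr brZl brZr.
Qed.
Lemma Der_zero : Der (fun _ => 0).
Proof.
split.
- split; [by move=> c x y; rewrite scaler0 addr0|by move=> u _; apply: fit0|by move=> u a _; rewrite br0l].
- by move=> _; apply: fit0.
- by move=> a b; rewrite br0l br0r addr0.
Qed.
Lemma Der_sum (I : Type) (s : seq I) (P : pred I) (F : I -> A -> A) :
  (forall i, P i -> Der (F i)) -> Der (fun x => \sum_(i <- s | P i) F i x).
Proof.
move=> h; elim: s => [|i s ih].
  by have := Der_zero; congr Der; apply: functional_extensionality => x; rewrite big_nil.
case Pi: (P i).
  have := Der_add (h i Pi) ih; congr Der; apply: functional_extensionality => x.
  by rewrite big_cons Pi.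
by move: ih; congr Der; apply: functional_extensionality => x; rewrite big_cons Pi.
Qed.

Lemma hom_of T c D : Der D -> (forall x, T x = c *: x + D x) ->
  (forall a b, br (T a) (T b) = c *: T (br a b)) /\ (forall a, fit br (T a - c *: a)).
Proof.
move=> [gD fD dD] hT; split; last by move=> a; rewrite hT [c *: a + _]addrC addrK.
move=> a b; rewrite !hT brDl !brDr (Hab (fD a) (fD b)) addr0 !brZl !brZr dD.
rewrite scalerDr !scalerA scalerDr -!addrA; congr (_ + _).
by rewrite addrC.
Qed.


Section Mon.
Variables (n : nat) (idx : 'I_n -> Lam).

Definition monF (m : 'X_{1..n}) (s : seq 'I_n) (x : A) :=
  foldr (fun i x => iter (m i) (ad (z (idx i))) x) x s.

Lemma monF_prop m s :
  Comm (monF m s) /\ ((all (fun i => m i == 0%N) s) -> forall x, monF m s x = x)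
  /\ (~~ all (fun i => m i == 0%N) s -> Der (monF m s)).
Proof.
elim: s => [|i s [c1 [i1 d1]]].
  by split; [exact: Comm_id|split].
have -> : monF m (i :: s) = fun x => iter (m i) (ad (z (idx i))) (monF m s x) by [].
rewrite [all _ _]/=.
split; first exact: (Comm_comp (Comm_iter _ (Comm_ad _)) c1).
split.
  by case/andP=> /eqP mi hs x; rewrite mi /= i1.
case: (boolP (all _ s)) => hs.
  rewrite andbT => mi.
  have -> : monF m s = id by apply: functional_extensionality => x; rewrite i1.
  case: (m i) mi => [//|j] _.
  have -> : (fun x => iter j.+1 (ad (z (idx i))) (id x)) =
            (fun x => iter j (ad (z (idx i))) (ad (z (idx i)) x)).
    by apply: functional_extensionality => x; rewrite iterSr.
  by apply: Der_comp; [case: (Comm_iter j (Comm_ad (z (idx i))))|apply: Der_ad].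
move=> _; apply: Der_comp; last exact: d1.
by case: (Comm_iter (m i) (Comm_ad (z (idx i)))).
Qed.

Lemma mon_actE m x : mon_act br z idx m x = monF m (enum 'I_n) x.
Proof. by []. Qed.

Lemma mon_Comm m : Comm (mon_act br z idx m).
Proof.
have -> : mon_act br z idx m = monF m (enum 'I_n) by [].
by case: (monF_prop m (enum 'I_n)).
Qed.

Lemma mon_act0 x : mon_act br z idx 0%MM x = x.
Proof.
rewrite mon_actE; case: (monF_prop 0%MM (enum 'I_n)) => _ [h _]; apply: h.
by apply/allP => i _; rewrite mnm0E.
Qed.

Lemma mon_Der m : m != 0%MM -> Der (mon_act br z idx m).
Proof.
move=> hm; have -> : mon_act br z idx m = monF m (enum 'I_n) by [].
case: (monF_prop m (enum 'I_n)) => _ [_ h]; apply: h.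
apply: contra hm => /allP h; apply/eqP/mnmP => i.
by rewrite mnm0E; apply/eqP; apply: h; rewrite mem_enum.
Qed.

Lemma poly_Comm p : Comm (poly_act br z idx p).
Proof.
have -> : poly_act br z idx p = fun x => \sum_(m <- msupp p | true) p@_m *: mon_act br z idx m x by [].
by apply: Comm_sum => m _; apply: Comm_scale; apply: mon_Comm.
Qed.

Definition polyD p x := \sum_(m <- msupp p | m != 0%MM) p@_m *: mon_act br z idx m x.

Lemma polyD_Der p : Der (polyD p).
Proof. by apply: Der_sum => m hm; apply: Der_scale; apply: mon_Der. Qed.

Lemma poly_actE p x : poly_act br z idx p x = p@_0 *: x + polyD p x.
Proof.
rewrite /poly_act /polyD (bigID (fun m => m == 0%MM)) /=; congr (_ + _).
rewrite -big_filter.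
case: (boolP (0%MM \in msupp p)) => h.
  rewrite (filter_pred1_uniq (msupp_uniq p) h) big_seq1 mon_act0 //.
have -> : [seq i <- msupp p | i == 0%MM] = [::].
  apply/eqP; rewrite -size_eq0 size_filter eqn0Ngt -has_count; apply/hasPn => m hm.
  by apply/eqP => e; move: hm; rewrite e (negbTE h).
by rewrite big_nil; move: h; rewrite mcoeff_msupp negbK => /eqP ->; rewrite scale0r.
Qed.

Lemma poly_hom p :
  (forall a b, br (poly_act br z idx p a) (poly_act br z idx p b)
     = p@_0 *: poly_act br z idx p (br a b)) /\
  (forall a, fit br (poly_act br z idx p a - p@_0 *: a)).
Proof. by apply: (hom_of (polyD_Der p)) => x; rewrite poly_actE. Qed.

End Mon.

Definition Cden (g : den k Lam) : k := \prod_(f <- g) (sf_p f)@_0.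

Lemma den_cat g1 g2 x : den_act br z (g1 ++ g2) x = den_act br z g1 (den_act br z g2 x).
Proof. by rewrite /den_act foldr_cat. Qed.

Lemma den_Comm g : Comm (den_act br z g).
Proof.
elim: g => [|f g ih] /=; first exact: Comm_id.
exact: (Comm_comp (poly_Comm _ _) ih).
Qed.

Lemma Cden_neq0 g : Cden g != 0.
Proof.
elim: g => [|f g ih]; first by rewrite /Cden big_nil oner_neq0.
by rewrite /Cden big_cons mulf_neq0 // sf_const.
Qed.

Lemma den_hom g :
  (forall a b, br (den_act br z g a) (den_act br z g b) = Cden g *: den_act br z g (br a b)) /\
  (forall a, fit br (den_act br z g a - Cden g *: a)).
Proof.
elim: g => [|f g [ih1 ih2]].
  by split=> [a b|a]; rewrite /Cden big_nil !scale1r //= subrr; apply: fit0.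
have [h1 h2] := poly_hom (@sf_idx _ _ f) (sf_p f).
have [[lP _ _] _] := poly_Comm (@sf_idx _ _ f) (sf_p f).
rewrite /Cden big_cons -/(Cden g); split.
  move=> a b /=; rewrite h1 ih1 linZ // scalerA //.
move=> a /=.
have -> : poly_act br z (@sf_idx _ _ f) (sf_p f) (den_act br z g a) - ((sf_p f)@_0 * Cden g) *: a
  = (poly_act br z (@sf_idx _ _ f) (sf_p f) (den_act br z g a) - (sf_p f)@_0 *: den_act br z g a)
    + (sf_p f)@_0 *: (den_act br z g a - Cden g *: a).
  by rewrite scalerBr scalerA addrA subrK.
by apply: fitD; [apply: h2|apply: fitZ; apply: ih2].
Qed.


Section PolyLin.
Variables (n : nat) (idx : 'I_n -> Lam).
Local Notation PA := (poly_act br z idx).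
Local Notation MA := (mon_act br z idx).

Lemma sum_msupp_ext (F : 'X_{1..n} -> A) (p : {mpoly k[n]}) (s : seq 'X_{1..n}) :
  uniq s -> {subset msupp p <= s} ->
  \sum_(m <- msupp p) p@_m *: F m = \sum_(m <- s) p@_m *: F m.
Proof.
move=> us sub.
rewrite [RHS](bigID (fun m => m \in msupp p)) /=.
rewrite [X in _ = _ + X]big1 ?addr0; last first.
  by move=> m; rewrite mcoeff_msupp negbK => /eqP ->; rewrite scale0r.
rewrite -[RHS]big_filter; apply: perm_big; apply: uniq_perm.
- exact: msupp_uniq.
- exact: filter_uniq.
- by move=> m; rewrite mem_filter; case: (boolP (m \in msupp p)) => // /sub ->.
Qed.

Lemma PA_add p q x : PA (p + q) x = PA p x + PA q x.
Proof.
rewrite /poly_act.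
set s := undup (msupp p ++ msupp q).
have us : uniq s by apply: undup_uniq.
rewrite !(@sum_msupp_ext _ _ s) //.
- by rewrite -big_split /=; apply: eq_bigr => m _; rewrite mcoeffD scalerDl.
- by move=> m hm; rewrite mem_undup mem_cat hm orbT.
- by move=> m hm; rewrite mem_undup mem_cat hm.
- by move=> m /msuppD_le; rewrite mem_undup.
Qed.

Lemma PA_scale c p x : PA (c *: p) x = c *: PA p x.
Proof.
rewrite /poly_act (@sum_msupp_ext _ (c *: p) (msupp p)) ?msupp_uniq //; last exact: msuppZ_le.
rewrite scaler_sumr; apply: eq_bigr => m _; by rewrite mcoeffZ scalerA.
Qed.

Lemma PA_zero x : PA 0 x = 0.
Proof. by have := PA_scale 0 0 x; rewrite !scale0r. Qed.

Lemma PA_sum (I : Type) (r : seq I) (F : I -> {mpoly k[n]}) x :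
  PA (\sum_(i <- r) F i) x = \sum_(i <- r) PA (F i) x.
Proof. by elim/big_rec2: _ => [|i y q _ <-]; rewrite ?PA_zero ?PA_add. Qed.

Lemma PA_X m x : PA 'X_[m] x = MA m x.
Proof. by rewrite /poly_act msuppX big_seq1 mcoeffX eqxx scale1r. Qed.

Lemma PA_one x : PA 1 x = x.
Proof. by rewrite -mpolyX0 PA_X mon_act0. Qed.

Lemma monF_shift j m s x : uniq s -> fit br x ->
  monF idx (mnm1 j + m)%MM s x =
  if j \in s then ad (z (idx j)) (monF idx m s x) else monF idx m s x.
Proof.
move=> + hx; elim: s => [|i s ih] //= /andP [his us].
have fs : fit br (monF idx m s x).
  by case: (monF_prop idx m s) => [[[_ f _] _] _]; apply: f.
rewrite mnmDE mnm1E in_cons ih //.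
case: (eqVneq j i) => [ji|ne] /=.
  by rewrite -ji in his *; rewrite (negbTE his) add0n.
rewrite add0n; case: (j \in s) => //.
case: (Comm_iter (m i) (Comm_ad (z (idx i)))) => [[_ _ c] _].
by move: (c _ (z (idx j)) fs); rewrite /ad => ->.
Qed.
End PolyLin.

Lemma mon_shift n (idx : 'I_n -> Lam) j m x : fit br x ->
  mon_act br z idx (mnm1 j + m)%MM x = ad (z (idx j)) (mon_act br z idx m x).
Proof. by move=> hx; rewrite !mon_actE monF_shift ?enum_uniq // mem_enum. Qed.

Lemma PA_Xmul n (idx : 'I_n -> Lam) j q x : fit br x ->
  poly_act br z idx ('X_j * q) x = ad (z (idx j)) (poly_act br z idx q x).
Proof.
move=> hx; rewrite {1}(mpolyE q) mulr_sumr PA_sum [poly_act _ _ _ q x]/poly_act lin_sum; last first.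
  by case: (Good_ad (z (idx j))).
apply: eq_bigr => m _; rewrite -scalerAr -mpolyXD PA_scale PA_X mon_shift //.
by rewrite /ad brZl.
Qed.

Lemma PA_Xexp n (idx : 'I_n -> Lam) j e q x : fit br x ->
  poly_act br z idx ('X_j ^+ e * q) x = iter e (ad (z (idx j))) (poly_act br z idx q x).
Proof.
move=> hx; elim: e => [|e ih]; first by rewrite expr0 mul1r.
by rewrite exprS -mulrA PA_Xmul // ih.
Qed.


Section Comp.
Variables (n n' : nat) (idx : 'I_n -> Lam) (idx' : 'I_n' -> Lam) (f : 'I_n -> 'I_n').
Hypothesis hf : forall i, idx' (f i) = idx i.

Lemma PA_prodX (m : 'X_{1..n}) s x : fit br x ->
  poly_act br z idx' (\prod_(i <- s) 'X_(f i) ^+ m i) x = monF idx m s x.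
Proof.
move=> hx; elim: s => [|i s ih]; first by rewrite big_nil PA_one.
by rewrite big_cons PA_Xexp // ih hf.
Qed.

Definition pcomp (p : {mpoly k[n]}) : {mpoly k[n']} :=
  \sum_(m <- msupp p) p@_m *: \prod_(i <- enum 'I_n) 'X_(f i) ^+ m i.

Lemma PA_pcomp p x : fit br x -> poly_act br z idx' (pcomp p) x = poly_act br z idx p x.
Proof.
move=> hx; rewrite /pcomp PA_sum [RHS]/poly_act; apply: eq_bigr => m _.
by rewrite PA_scale PA_prodX.
Qed.

Lemma prodX0 (m : 'X_{1..n}) :
  (\prod_(i <- enum 'I_n) ('X_(f i) : {mpoly k[n']}) ^+ m i)@_0 = (m == 0%MM)%:R.
Proof.
rewrite mprodXnE mcoeffX; congr (_ %:R).
rewrite -mdeg_eq0 mdeg_sum -[m == 0%MM]mdeg_eq0 mdegE.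
rewrite (eq_bigr (fun i => m i)); last by move=> i _; rewrite mdegMn mdeg1 mul1n.
by rewrite big_enum.
Qed.

Lemma pcomp_coef0 p : (pcomp p)@_0 = p@_0.
Proof.
rewrite {2}(mpolyE p) /pcomp.
elim/big_rec2: _ => [|m y1 y2 _ ih]; first by rewrite !mcoeff0.
by rewrite !mcoeffD !mcoeffZ prodX0 mcoeffX ih.
Qed.
End Comp.

Lemma reduce_idx n (idx : 'I_n -> Lam) : exists n' (idx' : 'I_n' -> Lam) (f : 'I_n -> 'I_n'),
  injective idx' /\ forall i, idx' (f i) = idx i.
Proof.
elim: n idx => [|n ih] idx.
  by exists 0%N, idx, id; split=> // [[]].
have [n' [idx' [f [inj hf]]]] := ih (fun i => idx (lift ord0 i)).
case: (Classical_Prop.classic (exists j, idx' j = idx ord0)) => [[j hj]|hn].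
  exists n', idx', (fun i => if unlift ord0 i is Some i' then f i' else j); split => // i.
  by case: unliftP => [i' ->|->].
exists n'.+1, (fun k => if unlift ord0 k is Some k' then idx' k' else idx ord0),
  (fun i => if unlift ord0 i is Some i' then lift ord0 (f i') else ord0); split.
  move=> k1 k2; case: unliftP => [k1' ->|->]; case: unliftP => [k2' ->|->] //.
  - by move/inj => ->.
  - by move=> e; case: hn; exists k1'.
  - by move=> e; case: hn; exists k2'.
move=> i /=; case: (unliftP ord0 i) => [i' ->|->].
  by rewrite liftK.
by rewrite unlift_none.
Qed.


Hypothesis Htf : fit_torsion_free br z.

Lemma poly_cancel n (idx : 'I_n -> Lam) (p : {mpoly k[n]}) b :
  p@_0 != 0 -> fit br b -> poly_act br z idx p b = 0 -> b = 0.
Proof.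
move=> hp hb h0.
have [n' [idx' [f [inj hf]]]] := reduce_idx idx.
apply: (Htf inj (p := pcomp f p)) => //.
  by apply: contraNneq hp => e; rewrite -(pcomp_coef0 f) e mcoeff0.
by rewrite (PA_pcomp hf).
Qed.

Lemma den_fit g b : fit br b -> fit br (den_act br z g b).
Proof. by case: (den_Comm g) => [[_ f _] _]; apply: f. Qed.

Lemma den_cancel g b : fit br b -> den_act br z g b = 0 -> b = 0.
Proof.
move=> hb; elim: g => [//|f g ih] /= h; apply: ih.
exact: (poly_cancel (sf_const f) (den_fit g hb) h).
Qed.


Lemma inV0 : inV z 0.
Proof.
exists 0%N, (fun i : 'I_0 => match i with @Ordinal _ m h => False_rect _ (notF h) end), (fun _ => 0).
by rewrite /zcomb big_ord0.
Qed.

Lemma inVZ c v : inV z v -> inV z (c *: v).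
Proof.
case=> n [idx [cc ->]]; exists n, idx, (fun i => c * cc i).
by rewrite /zcomb scaler_sumr; apply: eq_bigr => i _; rewrite scalerA.
Qed.

Lemma inVD v w : inV z v -> inV z w -> inV z (v + w).
Proof.
case=> n1 [idx1 [c1 ->]] [n2 [idx2 [c2 ->]]].
exists (n1 + n2)%N, (fun i => match split i with inl a => idx1 a | inr b => idx2 b end),
  (fun i => match split i with inl a => c1 a | inr b => c2 b end).
rewrite /zcomb big_split_ord /=; congr (_ + _); apply: eq_bigr => i _.
  by have -> : split (lshift n2 i) = inl i := unsplitK (inl _ i).
by have -> : split (rshift n1 i) = inr i := unsplitK (inr _ i).
Qed.

Lemma inVB v w : inV z v -> inV z w -> inV z (v - w).
Proof. by move=> hv hw; apply: inVD => //; rewrite -scaleN1r; apply: inVZ. Qed.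

Hypothesis Hbasis : fit_basis br z.

Lemma inV_fit0 v : inV z v -> fit br v -> v = 0.
Proof.
case=> n [idx [c ->]] hf.
have [n' [idx' [f [inj hfi]]]] := reduce_idx idx.
pose c' := fun j : 'I_n' => \sum_(i < n | f i == j) c i.
have e : zcomb z idx c = zcomb z idx' c'.
  rewrite /zcomb (partition_big f predT) //=; apply: eq_bigr => j _.
  rewrite /c' scaler_suml; apply: eq_bigr => i /eqP <-.
  by rewrite hfi.
rewrite e in hf *; have [h1 _] := Hbasis.
rewrite /zcomb big1 // => j _; by rewrite (h1 _ _ _ inj hf j) scale0r.
Qed.

Lemma decomp a : exists v b, [/\ inV z v, fit br b & a = v + b].
Proof.
have [_ h2] := Hbasis; have [n [idx [c hc]]] := h2 a.
exists (zcomb z idx c), (a - zcomb z idx c); split => //.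
  by exists n, idx, c.
by rewrite addrC subrK.
Qed.


Section OpS.
Variable gs : nat -> den k Lam.

Definition OpS (s : seq nat) (c : nat -> nat) (x : A) : A :=
  foldr (fun j y => iter (c j) (den_act br z (gs j)) y) x s.
Definition lstS (s : seq nat) (c : nat -> nat) : den k Lam :=
  flatten [seq flatten (nseq (c j) (gs j)) | j <- s].

Lemma den_nseq j g x : den_act br z (flatten (nseq j g)) x = iter j (den_act br z g) x.
Proof. by elim: j => [//|j ih] /=; rewrite den_cat ih. Qed.

Lemma OpS_lst s c x : den_act br z (lstS s c) x = OpS s c x.
Proof. by elim: s => [//|j s ih] /=; rewrite den_cat den_nseq ih. Qed.

Lemma OpS_Comm s c : Comm (OpS s c).
Proof.
have -> : OpS s c = den_act br z (lstS s c).
  by apply: functional_extensionality => x; rewrite OpS_lst.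
exact: den_Comm.
Qed.

Lemma OpS_fit s c u : fit br u -> fit br (OpS s c u).
Proof. by case: (OpS_Comm s c) => [[_ f _] _]; apply: f. Qed.

Lemma OpS_add s c1 c2 u : fit br u ->
  OpS s (fun j => (c1 j + c2 j)%N) u = OpS s c1 (OpS s c2 u).
Proof.
move=> hu; elim: s => [//|j s ih] /=; rewrite ih iterD; congr (iter _ _ _).
case: (OpS_Comm s c1) => _ h; rewrite h //; last exact: OpS_fit.
by case: (Comm_iter (c2 j) (den_Comm (gs j))).
Qed.

Lemma OpS_ext s c c' x : (forall j, j \in s -> c j = c' j) -> OpS s c x = OpS s c' x.
Proof.
elim: s => [//|j s ih] h /=; rewrite h ?mem_head // ih // => i hi.
by apply: h; rewrite in_cons hi orbT.
Qed.

Lemma OpS_zero s c x : (forall j, j \in s -> c j = 0%N) -> OpS s c x = x.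
Proof.
elim: s => [//|j s ih] h /=; rewrite h ?mem_head //= ih // => i hi.
by apply: h; rewrite in_cons hi orbT.
Qed.

Lemma OpS_delta s i u : uniq s -> i \in s ->
  OpS s (fun j => (i == j) : nat) u = den_act br z (gs i) u.
Proof.
elim: s => [//|j s ih] /= /andP [hj us]; rewrite in_cons.
case: (eqVneq i j) => [e|ne] /= hi.
  subst j; rewrite /= OpS_zero // => l hl; case: (eqVneq i l) => // e.
  by move: hj; rewrite e hl.
rewrite ih //; by move: hi; rewrite (negbTE ne).
Qed.
End OpS.


Fixpoint tcnt (t : term k) (i : nat) : nat :=
  match t with
  | TVar j => (j == i) : nat
  | TZero => 0
  | TAdd a b => tcnt a i + tcnt b i
  | TOpp a => tcnt a i
  | TScale _ a => tcnt a i
  | TBr a b => tcnt a i + tcnt b i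
  end.
Fixpoint tvars (N : nat) (t : term k) : bool :=
  match t with
  | TVar j => (j < N)%N
  | TZero => true
  | TAdd a b => tvars N a && tvars N b
  | TOpp a => tvars N a
  | TScale _ a => tvars N a
  | TBr a b => tvars N a && tvars N b
  end.
Fixpoint tsz (t : term k) : nat :=
  match t with
  | TVar j => 1
  | TZero => 0
  | TAdd a b => tsz a + tsz b
  | TOpp a => tsz a
  | TScale _ a => tsz a
  | TBr a b => tsz a + tsz b
  end.
Fixpoint fok (N K : nat) (f : qf_formula k) : bool :=
  match f with
  | FTrue | FFalse => true
  | FEq a b => [&& tvars N a, tvars N b, (tsz a <= K)%N & (tsz b <= K)%N]
  | FNot g => fok N K g
  | FAnd g h | FOr g h | FImp g h => fok N K g && fok N K h
  end.

Lemma tcnt_le t i : (tcnt t i <= tsz t)%N.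
Proof. elim: t => //= [j|a iha b ihb|a iha b ihb]; [by case: (j == i)| |]; exact: leq_add. Qed.

Lemma tvars_mono N N' t : (N <= N')%N -> tvars N t -> tvars N' t.
Proof.
move=> le; elim: t => //= [j|a iha b ihb|a iha b ihb].
- by move=> h; exact: leq_trans h le.
- by case/andP=> /iha -> /ihb ->.
- by case/andP=> /iha -> /ihb ->.
Qed.

Lemma fok_mono N K N' K' f : (N <= N')%N -> (K <= K')%N -> fok N K f -> fok N' K' f.
Proof.
move=> leN leK; elim: f => //= [a b|g ihg h ihh|g ihg h ihh|g ihg h ihh].
- case/and4P=> ha hb sa sb; apply/and4P; split; try exact: (tvars_mono leN).
  + exact: leq_trans sa leK.
  + exact: leq_trans sb leK.
- by case/andP=> /ihg -> /ihh ->.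
- by case/andP=> /ihg -> /ihh ->.
- by case/andP=> /ihg -> /ihh ->.
Qed.

Lemma fok_exists f : exists N K, fok N K f.
Proof.
elim: f => /=.
- by exists 0%N, 0%N.
- by exists 0%N, 0%N.
- move=> a b.
  have hv : forall t, exists N, tvars N t.
    elim=> /= [j||a1 [N1 h1] b1 [N2 h2]|a1 [N1 h1]|c a1 [N1 h1]|a1 [N1 h1] b1 [N2 h2]].
    + by exists j.+1.
    + by exists 0%N.
    + by exists (maxn N1 N2); rewrite (tvars_mono (leq_maxl _ _) h1) (tvars_mono (leq_maxr _ _) h2).
    + by exists N1.
    + by exists N1.
    + by exists (maxn N1 N2); rewrite (tvars_mono (leq_maxl _ _) h1) (tvars_mono (leq_maxr _ _) h2).
  have [N1 h1] := hv a; have [N2 h2] := hv b.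
  exists (maxn N1 N2), (maxn (tsz a) (tsz b)).
  by rewrite (tvars_mono (leq_maxl _ _) h1) (tvars_mono (leq_maxr _ _) h2) leq_maxl leq_maxr.
- by move=> g [N [K h]]; exists N, K.
- move=> g [N1 [K1 h1]] h [N2 [K2 h2]]; exists (maxn N1 N2), (maxn K1 K2).
  by rewrite (fok_mono (leq_maxl _ _) (leq_maxl _ _) h1) (fok_mono (leq_maxr _ _) (leq_maxr _ _) h2).
- move=> g [N1 [K1 h1]] h [N2 [K2 h2]]; exists (maxn N1 N2), (maxn K1 K2).
  by rewrite (fok_mono (leq_maxl _ _) (leq_maxl _ _) h1) (fok_mono (leq_maxr _ _) (leq_maxr _ _) h2).
- move=> g [N1 [K1 h1]] h [N2 [K2 h2]]; exists (maxn N1 N2), (maxn K1 K2).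
  by rewrite (fok_mono (leq_maxl _ _) (leq_maxl _ _) h1) (fok_mono (leq_maxr _ _) (leq_maxr _ _) h2).
Qed.


Lemma tele (a b c d : A) : a - d = (a - b) + (b - c) + (c - d).
Proof. by rewrite -[a - b + _]addrA [- b + _]addrA addNr add0r -addrA [- c + _]addrA addNr add0r. Qed.
Lemma swap4 (a b c d : A) : a + b = c + d -> a - c = d - b.
Proof. move=> h; apply/eqP; rewrite subr_eq; apply/eqP; rewrite -[a](addrK b) h [c + d]addrC addrAC //. Qed.

Section Transfer.
Variables (e : nat -> loc_car A Lam) (N K : nat).
Hypothesis He : forall i, loc_dom br z (e i).

Definition gs i := (e i).2.
Definition Op := OpS gs (iota 0 N).
Definition KK := fun _ : nat => K.
Definition CK := Cden (lstS gs (iota 0 N) KK).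
Definition mu := CK^-1.
Definition e' (i : nat) : A :=
  mu *: (Op KK (e i).1.1 + Op (fun j => (K - (i == j))%N) (e i).1.2).

Lemma CK_neq0 : CK != 0. Proof. exact: Cden_neq0. Qed.

Lemma Op_Comm c : Comm (Op c). Proof. exact: OpS_Comm. Qed.
Lemma Op_lin c : lin (Op c). Proof. by case: (Op_Comm c) => [[]]. Qed.
Lemma Op_fit c u : fit br u -> fit br (Op c u). Proof. exact: OpS_fit. Qed.
Lemma Op_good c : Good (Op c). Proof. by case: (Op_Comm c). Qed.

Lemma OK_hom a b : br (Op KK a) (Op KK b) = CK *: Op KK (br a b).
Proof. have [h _] := den_hom (lstS gs (iota 0 N) KK). by rewrite /Op -!OpS_lst h. Qed.
Lemma OK_fit a : fit br (Op KK a - CK *: a).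
Proof. have [_ h] := den_hom (lstS gs (iota 0 N) KK). by rewrite /Op -!OpS_lst. Qed.

Lemma Ocomp a b c u : fit br u -> (forall j, a j + b j = c j)%N -> Op a (Op b u) = Op c u.
Proof.
move=> hu h; rewrite /Op -OpS_add //; apply: OpS_ext => j _; exact: h.
Qed.

Lemma Ocommute S c u : Good S -> fit br u -> S (Op c u) = Op c (S u).
Proof. by move=> gS hu; case: (Op_Comm c) => _ h; apply: h. Qed.

Local Notation ev := (@eval_term k (loc_struct br z) e).
Local Notation ev' := (@eval_term k (lie_struct br) e').

Lemma br_image v1 b1 v2 b2 c1 c2 : fit br b1 -> fit br b2 ->
  br (Op KK v1 + Op c1 b1) (Op KK v2 + Op c2 b2)
  = CK *: (Op KK (br v1 v2) + Op c1 (br b1 v2) - Op c2 (br b2 v1)).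
Proof.
move=> h1 h2.
have f1 := Op_fit c1 h1; have f2 := Op_fit c2 h2.
have [_ _ g1] := Op_good c1; have [_ _ g2] := Op_good c2.
rewrite brDl !brDr (Hab f1 f2) addr0 OK_hom.
have -> : br (Op c1 b1) (Op KK v2) = CK *: Op c1 (br b1 v2).
  rewrite -[Op KK v2](subrK (CK *: v2)) brDr (Hab f1 (OK_fit v2)) add0r brZr g1 //.
have -> : br (Op KK v1) (Op c2 b2) = - (CK *: Op c2 (br b2 v1)).
  rewrite brC -[Op KK v1](subrK (CK *: v1)) brDr (Hab f2 (OK_fit v1)) add0r brZr g2 //.
by rewrite scalerBr scalerDr addrAC.
Qed.

Lemma inv_term t : tvars N t -> (tsz t <= K)%N ->
  let x := ev t in
  [/\ inV z x.1.1, fit br x.1.2,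
      (forall u, fit br u -> den_act br z x.2 u = Op (tcnt t) u)
    & ev' t = mu *: (Op KK x.1.1 + Op (fun j => (K - tcnt t j)%N) x.1.2)].
Proof.
elim: t => [i||a iha b ihb|a iha|c a iha|a iha b ihb] /=.
- move=> hi _; have [h1 h2] := He i; split => //.
  by move=> u hu; rewrite /Op OpS_delta ?iota_uniq // mem_iota add0n.
- move=> _ _; split.
  + exact: inV0.
  + exact: fit0.
  + by move=> u _; rewrite /Op OpS_zero.
  + by rewrite !(lin0 (Op_lin _)) addr0 scaler0.
- move=> /andP [va vb] hs.
  have ha : (tsz a <= K)%N by apply: leq_trans hs; apply: leq_addr.
  have hb : (tsz b <= K)%N by apply: leq_trans hs; apply: leq_addl.
  have [i1 f1 d1 e1] := iha va ha; have [i2 f2 d2 e2] := ihb vb hb.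
  have hc : forall j, (tcnt a j + tcnt b j <= K)%N.
    by move=> j; apply: leq_trans hs; apply: leq_add; apply: tcnt_le.
  rewrite /loc_add /=; split.
  + exact: inVD.
  + by apply: fitD; apply: den_fit.
  + move=> u hu; rewrite den_cat (d2 u hu) (d1 _ (Op_fit _ hu)); exact: Ocomp.
    rewrite e1 e2 d1 // d2 //.
    rewrite (linD (Op_lin (fun j => (K - tcnt (TAdd a b) j)%N))).
    rewrite (Ocomp (c := fun j => (K - tcnt a j)%N)) //; last by move=> j /=; have := hc j; lia.
    rewrite (Ocomp (c := fun j => (K - tcnt b j)%N)) //; last by move=> j /=; have := hc j; lia.
    rewrite (linD (Op_lin KK)) -!scalerDr; congr (_ *: _).
    by rewrite addrACA.
- move=> va ha; have [i1 f1 d1 e1] := iha va ha.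
  rewrite /loc_opp /=; split.
  + by rewrite -scaleN1r; apply: inVZ.
  + exact: fitN.
  + exact: d1.
  + by rewrite e1 !(linN (Op_lin _)) -opprD scalerN.
- move=> va ha; have [i1 f1 d1 e1] := iha va ha.
  rewrite /loc_scale /=; split.
  + exact: inVZ.
  + exact: fitZ.
  + exact: d1.
  + by rewrite e1 !(linZ (Op_lin _)) -scalerDr !scalerA mulrC.
- move=> /andP [va vb] hs.
  have ha : (tsz a <= K)%N by apply: leq_trans hs; apply: leq_addr.
  have hb : (tsz b <= K)%N by apply: leq_trans hs; apply: leq_addl.
  have [i1 f1 d1 e1] := iha va ha; have [i2 f2 d2 e2] := ihb vb hb.
  have hc : forall j, (tcnt a j + tcnt b j <= K)%N.
    by move=> j; apply: leq_trans hs; apply: leq_add; apply: tcnt_le.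
  rewrite /loc_br /=; split.
  + exact: inV0.
  + apply: fitB; first (apply: fitD; apply: den_fit); [exact: fit_br|exact: fit_brl|].
    by apply: den_fit; apply: fit_brl.
  + move=> u hu; rewrite den_cat (d2 u hu) (d1 _ (Op_fit _ hu)); exact: Ocomp.
  + rewrite e1 e2 brZl brZr scalerA br_image //.
    set v1 := (ev a).1.1. set v2 := (ev b).1.1. set b1 := (ev a).1.2. set b2 := (ev b).1.2.
    rewrite den_cat (d2 (br v1 v2)) ?fit_br //.
    rewrite d1; last by apply: Op_fit; apply: fit_br.
    rewrite d2; last exact: fit_brl.
    rewrite d1; last exact: fit_brl.
    rewrite (Ocomp (c := fun j => (tcnt a j + tcnt b j)%N)) //; last exact: fit_br.
    rewrite (linB (Op_lin _)) (linD (Op_lin _)).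
    rewrite (Ocomp (c := KK)) //; last (by move=> j /=; rewrite /KK; have := hc j; lia); last exact: fit_br.
    rewrite (Ocomp (c := fun j => (K - tcnt a j)%N)) //; last (by move=> j /=; have := hc j; lia); last exact: fit_brl.
    rewrite (Ocomp (c := fun j => (K - tcnt b j)%N)) //; last (by move=> j /=; have := hc j; lia); last exact: fit_brl.
    rewrite (lin0 (Op_lin _)) add0r scalerA -mulrA /mu mulVf ?CK_neq0 // mulr1.
    by [].
    exact: fit_br.
Qed.

Lemma atom (x1 x2 : loc_car A Lam) c1 c2 :
  inV z x1.1.1 -> inV z x2.1.1 -> fit br x1.1.2 -> fit br x2.1.2 ->
  (forall u, fit br u -> den_act br z x1.2 u = Op c1 u) ->
  (forall u, fit br u -> den_act br z x2.2 u = Op c2 u) ->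
  (forall j, c1 j <= K)%N -> (forall j, c2 j <= K)%N ->
  loc_eqv br z x1 x2 <->
  mu *: (Op KK x1.1.1 + Op (fun j => (K - c1 j)%N) x1.1.2)
  = mu *: (Op KK x2.1.1 + Op (fun j => (K - c2 j)%N) x2.1.2).
Proof.
move=> i1 i2 f1 f2 d1 d2 h1 h2.
set O1 := fun j => (K - c1 j)%N; set O2 := fun j => (K - c2 j)%N.
have g1 := Op_good O1; have g2 := Op_good O2.
have key : Op O1 (Op O2 (den_act br z x2.2 x1.1.2 - den_act br z x1.2 x2.1.2))
         = Op KK (Op O1 x1.1.2 - Op O2 x2.1.2).
  rewrite d2 // d1 // (linB (Op_lin O2)) (linB (Op_lin O1)) (linB (Op_lin KK)).
  rewrite (Ocomp (a := O2) (b := c2) (c := KK)) //; last by move=> j; rewrite /O2 /KK; have := h2 j; lia.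
  rewrite (Ocommute _ g1 f1).
  rewrite -(Ocommute _ g2 (Op_fit _ f2)) (Ocomp (a := O1) (b := c1) (c := KK)) //; last by move=> j; rewrite /O1 /KK; have := h1 j; lia.
  by rewrite (Ocommute _ g2 f2).
have fd : fit br (Op O1 x1.1.2 - Op O2 x2.1.2) by apply: fitB; apply: Op_fit.
split.
  case=> ev [T hT]; rewrite ev; congr (_ *: (_ + _)); apply/eqP; rewrite -subr_eq0; apply/eqP.
  apply: (den_cancel (g := lstS gs (iota 0 N) KK)) => //.
  apply: (den_cancel (g := T)); first by rewrite OpS_lst; apply: Op_fit.
  rewrite OpS_lst -/(Op KK _) -key.
  have gS : Good (fun x => Op O1 (Op O2 x)) by apply: Good_comp.
  case: (den_Comm T) => _ hc; rewrite -(hc _ gS); first by rewrite /= hT !(lin0 (Op_lin _)).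
  by apply: fitB; apply: den_fit.
move=> h.
have h' : Op KK x1.1.1 + Op O1 x1.1.2 = Op KK x2.1.1 + Op O2 x2.1.2.
  have := congr1 (fun x => CK *: x) h; rewrite /= !scalerA /mu mulfV ?CK_neq0 // !scale1r.
  done.
have hv : x1.1.1 = x2.1.1.
  apply/eqP; rewrite -subr_eq0; apply/eqP; apply: inV_fit0; first exact: inVB.
  have : fit br (CK *: (x1.1.1 - x2.1.1)).
    rewrite scalerBr (tele _ (Op KK x1.1.1) (Op KK x2.1.1)).
    apply: fitD; last exact: OK_fit.
    apply: fitD; first by rewrite -opprB; apply: fitN; apply: OK_fit.
    by rewrite (swap4 h') -opprB; apply: fitN.
  by move/(fitZ CK^-1); rewrite scalerA mulVf ?CK_neq0 // scale1r.
split => //; exists (lstS gs (iota 0 N) O1 ++ lstS gs (iota 0 N) O2).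
rewrite den_cat !OpS_lst -/(Op O1 _) -/(Op O2 _) key.
rewrite hv in h'; have -> : Op O1 x1.1.2 = Op O2 x2.1.2 by apply: (addrI _ h').
by rewrite subrr (lin0 (Op_lin _)).
Qed.

Local Notation holdsL := (@holds k (loc_struct br z) e).
Local Notation holdsA := (@holds k (lie_struct br) e').

Lemma holds_tr f : fok N K f -> (holdsL f <-> holdsA f).
Proof.
elim: f => //=.
- move=> a b /and4P [va vb sa sb].
  have [i1 f1 d1 e1] := inv_term va sa; have [i2 f2 d2 e2] := inv_term vb sb.
  rewrite e1 e2; apply: atom => // j.
  + exact: leq_trans (tcnt_le a j) sa.
  + exact: leq_trans (tcnt_le b j) sb.
- by move=> g ihg /ihg; tauto.
- by move=> g ihg h ihh /andP [/ihg hg /ihh hh]; tauto.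
- by move=> g ihg h ihh /andP [/ihg hg /ihh hh]; tauto.
- by move=> g ihg h ihh /andP [/ihg hg /ihh hh]; tauto.
Qed.

End Transfer.
End Dev.

Lemma OpS_nil (k : fieldType) (A : lmodType k) (br : A -> A -> A) (Lam : Type) (z : Lam -> A)
  (gs : nat -> den k Lam) s c x :
  (forall j, gs j = [::]) -> OpS br z gs s c x = x.
Proof.
move=> h; elim: s => [//|j s ih] /=; rewrite ih h.
by elim: (c j) => [//|m ihm] /=; rewrite ihm.
Qed.

Lemma lstS_nil (k : fieldType) (Lam : Type) (gs : nat -> den k Lam) s c :
  (forall j, gs j = [::]) -> lstS gs s c = [::].
Proof.
move=> h; elim: s => [//|j s ih] /=; rewrite /lstS /= -/(lstS gs s c) ih h cats0.
by elim: (c j) => [//|m ihm] /=.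
Qed.

Theorem proposition4p2p2 (k : fieldType) (A : lmodType k) (br : A -> A -> A)
  (Lam : Type) (z : Lam -> A) :
  lie_axioms br -> metabelian br -> fit_basis br z -> U_algebra br z ->
  univ_equiv (lie_struct br) (loc_struct br z).
Proof.
move=> Hl Hm Hb [Hab Htf] f.
have [N [K hf]] := fok_exists f.
split.
  move=> HA e He; apply/(holds_tr Hl Hm Hab Htf Hb He hf); apply: HA => i //.
move=> HL eA _.
have hd : forall i, exists vb : A * A, [/\ inV z vb.1, fit br vb.2 & eA i = vb.1 + vb.2].
  move=> i; have [v [b [h1 h2 h3]]] := decomp Hb (eA i).
  by exists (v, b).
pose pick i := proj1_sig (constructive_indefinite_description _ (hd i)).
have hp : forall i, [/\ inV z (pick i).1, fit br (pick i).2 & eA i = (pick i).1 + (pick i).2].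
  by move=> i; rewrite /pick; case: constructive_indefinite_description.
pose e := fun i => ((pick i).1, (pick i).2, [::] : den k Lam) : loc_car A Lam.
have He : forall i, loc_dom br z (e i) by move=> i; case: (hp i) => h1 h2 _; split.
have := HL e He; rewrite (holds_tr Hl Hm Hab Htf Hb He hf).
suff -> : e' br z e N K = eA by [].
apply: functional_extensionality => i.
have g0 : forall j, gs e j = [::] by [].
rewrite /e' /mu /CK /Op lstS_nil // !OpS_nil //.
rewrite /Cden big_nil invr1 scale1r; by case: (hp i).
Qed.
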